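(* Let $p,q\in E$, let $\mathsf{v}\in V$ be spacelike and let $\mathsf{w}\in V$ be future-pointing timelike with $\mathsf{w}\cdot\mathsf{v}\neq0$. Then $q+t\mathsf{w}\in\mathrm{int}\big(\mathcal{H}(\mathsf{v},p)\big)$ for all sufficiently large $t$ if and only if the point $[q+\mathbb{R}_+\mathsf{w}]\in\mathbb{H}^2$ lies in $\mathrm{int}\big(\mathcal{HS}(\mathsf{v})\big)$.
   Context: $V=\mathbb{R}^3$ with Lorentzian inner product $x\cdot y=x_1y_1+x_2y_2-x_3y_3$ and standard orientation; $E$ is the affine space with translation space $V$. Timelike: $x\cdot x<0$; null: $x\cdot x=0$; spacelike: $x\cdot x>0$; future-pointing: third coordinate positive. Points of $\mathbb{H}^2$ are identified with parallelism classes $[q+\mathbb{R}_+\mathsf{w}]$ of future-pointing timelike rays. For spacelike $\mathsf{v}$, $\mathcal{HS}(\mathsf{v})=\{[q+\mathbb{R}_+\mathsf{w}]\in\mathbb{H}^2:\mathsf{w}\cdot\mathsf{v}\ge0\}$ is a half-plane of $\mathbb{H}^2$. $\mathsf{v}^-,\mathsf{v}^+$ are the two future-pointing null vectors of Euclidean length $1$ in $\mathsf{v}^\perp$, labelled so that $(\mathsf{v}^-,\mathsf{v}^+,\mathsf{v})$ is positively oriented. The crooked half-space $\mathcal{H}(\mathsf{v},p)$ is the set of $q\in E$ with $(q-p)\cdot\mathsf{v}^+\le0$ if $(q-p)\cdot\mathsf{v}\ge0$, and $(q-p)\cdot\mathsf{v}^-\ge0$ if $(q-p)\cdot\mathsf{v}\le0$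 (both when $(q-p)\cdot\mathsf{v}=0$). *)

(* Defs.v *)
(* concrete reals R. V = R^3 as a record of coordinates;
   the affine space E is identified with R^3 (choice of origin). *)
From Stdlib Require Import Reals.
Open Scope R_scope.

Record vec := mkv { c1 : R; c2 : R; c3 : R }.

Definition vadd (x y : vec) : vec := mkv (c1 x + c1 y) (c2 x + c2 y) (c3 x + c3 y).
Definition vsub (x y : vec) : vec := mkv (c1 x - c1 y) (c2 x - c2 y) (c3 x - c3 y).
Definition vscale (t : R) (x : vec) : vec := mkv (t * c1 x) (t * c2 x) (t * c3 x).

Definition ldot (x y : vec) : R := c1 x * c1 y + c2 x * c2 y - c3 x * c3 y.

Definition enorm (x : vec) : R := sqrt (c1 x * c1 x + c2 x * c2 x + c3 x * c3 x).

Definition det3 (a b c : vec) : R :=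
  c1 a * (c2 b * c3 c - c3 b * c2 c)
  - c2 a * (c1 b * c3 c - c3 b * c1 c)
  + c3 a * (c1 b * c2 c - c2 b * c1 c).

Definition timelike (x : vec) : Prop := ldot x x < 0.
Definition null (x : vec) : Prop := ldot x x = 0.
Definition spacelike (x : vec) : Prop := ldot x x > 0.
Definition future (x : vec) : Prop := c3 x > 0.

(* (vm, vp) = (v^-, v^+): the two future-pointing null vectors of Euclidean
   length 1 in v^perp, labelled so that (v^-, v^+, v) is positively oriented. *)
Definition null_frame (v vm vp : vec) : Prop :=
  null vm /\ future vm /\ enorm vm = 1 /\ ldot vm v = 0 /\
  null vp /\ future vp /\ enorm vp = 1 /\ ldot vp v = 0 /\
  det3 vm vp v > 0.

Definition crooked_halfspace (v vm vp p : vec) (q : vec) : Prop :=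
  (ldot (vsub q p) v >= 0 -> ldot (vsub q p) vp <= 0) /\
  (ldot (vsub q p) v <= 0 -> ldot (vsub q p) vm >= 0).

Definition interiorE (S : vec -> Prop) (q : vec) : Prop :=
  exists eps, eps > 0 /\ forall x, enorm (vsub x q) < eps -> S x.

(* H^2 = parallelism classes of future timelike rays; the class
   [q + R_+ w] depends only on the direction w, so a subset of H^2 is
   represented by a predicate on future timelike vectors w that is
   invariant under positive scaling. *)
Definition HS (v : vec) (w : vec) : Prop := ldot w v >= 0.

(* interior in H^2 (quotient topology of the open future timelike cone
   by positive scaling): [w] is interior to the saturated set S iff some
   neighbourhood of w in the future timelike cone lies in S. *)
Definition interiorH2 (S : vec -> Prop) (w : vec) : Prop :=
  exists eps, eps > 0 /\
    forall w', timelike w' -> future w' -> enorm (vsub w' w) < eps -> S w'.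

(* Main.v *)
Require Import Defs.
From Stdlib Require Import Reals Lra Psatz.
Require Import Defs.
Open Scope R_scope.

Lemma coord_bound (d : vec) (eps : R) : enorm d < eps ->
  Rabs (c1 d) < eps /\ Rabs (c2 d) < eps /\ Rabs (c3 d) < eps.
Proof.
  unfold enorm; intros H.
  assert (Hs : forall z, z*z <= c1 d * c1 d + c2 d * c2 d + c3 d * c3 d ->
     Rabs z < eps).
  { intros z Hz. rewrite <- sqrt_Rsqr_abs. unfold Rsqr.
    eapply Rle_lt_trans; [|exact H]. apply sqrt_le_1_alt. exact Hz. }
  repeat split; apply Hs; nra.
Qed.

Lemma Rabs_le_inv (x a : R) : Rabs x <= a -> - a <= x <= a.
Proof. intros H. pose proof (Rle_abs x). pose proof (Rle_abs (-x)).
  rewrite Rabs_Ropp in *. lra. Qed.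

Definition S (a : vec) := Rabs (c1 a) + Rabs (c2 a) + Rabs (c3 a).

Lemma S_nonneg a : 0 <= S a.
Proof. unfold S. pose proof (Rabs_pos (c1 a)); pose proof (Rabs_pos (c2 a));
  pose proof (Rabs_pos (c3 a)); lra. Qed.

Lemma dot_bound (d a : vec) (eps : R) : enorm d < eps ->
  Rabs (ldot d a) <= eps * S a.
Proof.
  intros H. destruct (coord_bound d eps H) as [H1 [H2 H3]].
  unfold ldot, S.
  assert (K : forall x y, Rabs x < eps -> Rabs (x*y) <= eps * Rabs y).
  { intros x y Hx. rewrite Rabs_mult. apply Rmult_le_compat_r.
    apply Rabs_pos. lra. }
  pose proof (K _ (c1 a) H1); pose proof (K _ (c2 a) H2); pose proof (K _ (c3 a) H3).
  eapply Rle_trans. apply Rabs_triang.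
  rewrite Rabs_Ropp.
  pose proof (Rabs_triang (c1 d * c1 a) (c2 d * c2 a)). lra.
Qed.

Lemma dot_lin (x y p a : vec) :
  ldot (vsub x p) a = ldot (vsub y p) a + ldot (vsub x y) a.
Proof. unfold ldot, vsub; simpl; ring. Qed.

Lemma dot_ray (q w p a : vec) (t : R) :
  ldot (vsub (vadd q (vscale t w)) p) a = ldot (vsub q p) a + t * ldot w a.
Proof. unfold ldot, vsub, vadd, vscale; simpl; ring. Qed.

Lemma tl_null_neg (w n : vec) : timelike w -> future w -> null n -> future n ->
  ldot w n < 0.
Proof.
  unfold timelike, future, null, ldot. intros H1 H2 H3 H4.
  set (a := c1 w * c1 n + c2 w * c2 n).
  assert (CS : a * a <= (c1 w * c1 w + c2 w * c2 w) * (c1 n * c1 n + c2 n * c2 n)).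
  { unfold a. pose proof (Rle_0_sqr (c1 w * c2 n - c2 w * c1 n)) as Q.
    unfold Rsqr in Q. lra. }
  assert (P1 : 0 <= c1 n * c1 n + c2 n * c2 n) by nra.
  assert (P2 : c1 w * c1 w + c2 w * c2 w < c3 w * c3 w) by lra.
  assert (a * a < (c3 w * c3 n) * (c3 w * c3 n)).
  { assert (c1 n * c1 n + c2 n * c2 n = c3 n * c3 n) as E by lra.
    rewrite E in CS.
    assert (0 < c3 n * c3 n) by nra.
    replace ((c3 w * c3 n) * (c3 w * c3 n)) with ((c3 w * c3 w) * (c3 n * c3 n)) by ring.
    nra. }
  assert (0 < c3 w * c3 n) by nra.
  fold a. nra.
Qed.

Lemma enorm0 (y : vec) : enorm (vsub y y) = 0.
Proof. unfold enorm, vsub; simpl.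
  replace (_ + _ + _) with 0 by ring. apply sqrt_0. Qed.

Theorem lemma3p1 (p q v w vm vp : vec) :
  spacelike v -> null_frame v vm vp ->
  timelike w -> future w -> ldot w v <> 0 ->
  ((exists T : R, forall t : R, t >= T ->
      interiorE (crooked_halfspace v vm vp p) (vadd q (vscale t w)))
   <-> interiorH2 (HS v) w).
Proof.
  intros Hv [Nm [Fm [_ [_ [Np [Fp [_ [_ _]]]]]]]] Hw Fw Hwv.
  pose proof (tl_null_neg w vm Hw Fw Nm Fm) as Dm.
  pose proof (tl_null_neg w vp Hw Fw Np Fp) as Dp.
  split.
  - intros [T HT].
    assert (Pos : ldot w v > 0).
    { destruct (Rtotal_order (ldot w v) 0) as [Hn|[He|Hp]]; [|contradiction|exact Hp].
      exfalso.
      set (A := ldot (vsub q p) v). set (C := ldot (vsub q p) vm).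
      set (t := Rmax T (Rmax (Rabs A / (- ldot w v)) ((Rabs C + 1) / (- ldot w vm)))).
      assert (t1 : t >= T) by (unfold t; pose proof (Rmax_l T (Rmax (Rabs A / (- ldot w v)) ((Rabs C + 1) / (- ldot w vm)))); lra).
      assert (t2 : t >= Rabs A / (- ldot w v)).
      { unfold t. pose proof (Rmax_r T (Rmax (Rabs A / (- ldot w v)) ((Rabs C + 1) / (- ldot w vm)))).
        pose proof (Rmax_l (Rabs A / (- ldot w v)) ((Rabs C + 1) / (- ldot w vm))). lra. }
      assert (t3 : t >= (Rabs C + 1) / (- ldot w vm)).
      { unfold t. pose proof (Rmax_r T (Rmax (Rabs A / (- ldot w v)) ((Rabs C + 1) / (- ldot w vm)))).
        pose proof (Rmax_r (Rabs A / (- ldot w v)) ((Rabs C + 1) / (- ldot w vm))). lra. }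
      assert (e2 : Rabs A / (- ldot w v) * (- ldot w v) = Rabs A) by (field; lra).
      assert (e3 : (Rabs C + 1) / (- ldot w vm) * (- ldot w vm) = Rabs C + 1) by (field; lra).
      assert (u1 : A + t * ldot w v <= 0).
      { pose proof (Rle_abs A). nra. }
      assert (u2 : C + t * ldot w vm < 0).
      { pose proof (Rle_abs C). nra. }
      destruct (HT t t1) as [eps [He Hin]].
      set (y := vadd q (vscale t w)).
      assert (Hy := Hin y ltac:(rewrite enorm0; lra)).
      destruct Hy as [_ H2].
      unfold y in H2. rewrite !dot_ray in H2. fold A C in H2.
      specialize (H2 ltac:(lra)). lra. }
    exists (ldot w v / (1 + S v)). pose proof (S_nonneg v). split.
    + apply Rdiv_lt_0_compat; lra.
    + intros w' _ _ Hn. unfold HS.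
      pose proof (dot_bound _ v _ Hn) as B.
      assert (E : ldot w' v = ldot w v + ldot (vsub w' w) v)
        by (unfold ldot, vsub; simpl; ring).
      assert (ldot w v / (1 + S v) * S v < ldot w v).
      { apply (Rmult_lt_reg_r (1 + S v)). lra.
        replace (ldot w v / (1 + S v) * S v * (1 + S v)) with (ldot w v * S v)
          by (field; lra). nra. }
      pose proof (Rabs_le_inv (ldot (vsub w' w) v) _ B). lra.
  - intros [eps [He H]].
    assert (Pos : ldot w v > 0).
    { assert (HS v w) as Hh by (apply H; auto; rewrite enorm0; lra).
      unfold HS in Hh. lra. }
    set (A := ldot (vsub q p) v). set (C := ldot (vsub q p) vp).
    exists ((Rabs A + 1) / ldot w v + (Rabs C + 1) / (- ldot w vp)).
    intros t Ht.
    assert (a1 : (Rabs A + 1) / ldot w v >= 0).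
    { apply Rle_ge, Rlt_le, Rdiv_lt_0_compat; pose proof (Rabs_pos A); lra. }
    assert (a2 : (Rabs C + 1) / (- ldot w vp) >= 0).
    { apply Rle_ge, Rlt_le, Rdiv_lt_0_compat; pose proof (Rabs_pos C); lra. }
    assert (e2 : (Rabs A + 1) / ldot w v * ldot w v = Rabs A + 1) by (field; lra).
    assert (e3 : (Rabs C + 1) / (- ldot w vp) * (- ldot w vp) = Rabs C + 1) by (field; lra).
    assert (u1 : A + t * ldot w v >= 1).
    { pose proof (Rle_abs (-A)). rewrite Rabs_Ropp in H0. nra. }
    assert (u2 : C + t * ldot w vp <= -1).
    { pose proof (Rle_abs C). nra. }
    pose proof (S_nonneg v). pose proof (S_nonneg vp).
    exists (1 / (1 + S v + S vp)). split.
    + apply Rdiv_lt_0_compat; lra.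
    + intros x Hx.
      set (y := vadd q (vscale t w)) in *.
      assert (k : 1 / (1 + S v + S vp) * (1 + S v + S vp) = 1) by (field; lra).
      assert (k0 : 0 < 1 / (1 + S v + S vp)) by (apply Rdiv_lt_0_compat; lra).
      pose proof (dot_bound _ v _ Hx) as B1.
      pose proof (dot_bound _ vp _ Hx) as B2.
      pose proof (Rabs_le_inv _ _ B1). pose proof (Rabs_le_inv _ _ B2).
      set (e := 1 / (1 + S v + S vp)) in *.
      assert (m1 : e * S v < 1) by nra.
      assert (m2 : e * S vp < 1) by nra.
      assert (L1 : ldot (vsub x p) v > 0).
      { rewrite (dot_lin x y). unfold y at 1. rewrite dot_ray. fold A. lra. }
      assert (L2 : ldot (vsub x p) vp < 0).
      { rewrite (dot_lin x y). unfold y at 1. rewrite dot_ray. fold C. lra. }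
      split; intros; lra.
Qed.
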